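(* Let $X_1,\ldots,X_d$ be $d$ disjoint sets and let $a_1,\ldots,a_d,b_1,\ldots,b_d$ be nonnegative integers. Suppose $A_1,\ldots,A_h$ and $B_1,\ldots,B_h$ are two families of subsets of $X_1\cup\cdots\cup X_d$ that satisfy: (1) $A_i\cap B_i=\emptyset$ for every $1\le i\le h$; (2) $A_i\cap B_j\neq\emptyset$ for every $1\le i<j\le h$; (3) for every $1\le i\le h$ and $1\le j\le d$ we have $|B_i\cap X_j|\le b_j$; (4) for every $1\le i\le h$ there is a permutation $\pi:[d]\to[d]$ such that for every $1\le j\le d$ we have $|A_i\cap X_j|\le a_{\pi(j)}$. Then $h\le Q(a_1,\ldots,a_d,b_1,\ldots,b_d)$, where $Q(a_1,\ldots,a_d,b_1,\ldots,b_d)$ is defined as follows: put $a:=\max_i a_i$, take disjoint sets $U_1,\ldots,U_d$ with $|U_i|=a+b_i$, identifying each $U_i$ with $[a+b_i]=\{1,\ldots,a+b_i\}$; then $Q(a_1,\ldots,a_d,b_1,\ldots,b_d)$ is the number of sets $S\subseteq U_1\cup\cdots\cup U_d$ for which there is a permutation $\pi:[d]\to[d]$ such that, for every $i$, $S\cap U_i$ is a subset of $[a_{\pi(i)}+b_i]$ of size $b_i$. Moreover, this bound is best possible for every choice of $a_1,\ldots,a_d$ and $b_1,\ldots,b_d$.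
   Context: $[n]$ denotes $\{1,\ldots,n\}$. This is a multi-partite variant of Bollobás's Two Families Theorem; it differs from Alon's multi-partite Two Families Theorem (which gives $h\le\prod_{j=1}^d\binom{a_j+b_j}{b_j}$) in that the permutation $\pi$ in condition (4) may depend on $i$ rather than being the identity. *)

(* Defs.v *)
From mathcomp Require Import all_boot fingroup perm.
Set Implicit Arguments. Unset Strict Implicit. Unset Printing Implicit Defensive.

Definition pairwise_disjoint (T : finType) (d : nat) (X : 'I_d -> {set T}) :=
  forall j k : 'I_d, j != k -> [disjoint X j & X k].

Definition two_families (T : finType) (d h : nat) (X : 'I_d -> {set T})
    (a b : 'I_d -> nat) (A B : 'I_h -> {set T}) : Prop :=
     (forall i, A i \subset \bigcup_(j < d) X j) /\
      (forall i, B i \subset \bigcup_(j < d) X j) /\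
      (forall i, [disjoint A i & B i]) /\
      (forall i j : 'I_h, i < j -> A i :&: B j != set0) /\
      (forall (i : 'I_h) (j : 'I_d), #|B i :&: X j| <= b j) /\
      (forall i : 'I_h, exists pi : {perm 'I_d},
          forall j : 'I_d, #|A i :&: X j| <= a (pi j)).

Definition amax (d : nat) (a : 'I_d -> nat) : nat := \max_(i < d) a i.

(* U_1 + ... + U_d, with U_i identified with [a + b_i] (here 'I_(a+b_i),
   i.e. {0,...,a+b_i-1}). *)
Definition Uspace (d : nat) (a b : 'I_d -> nat) : finType :=
  {i : 'I_d & 'I_(amax a + b i)}.

Definition Uslice (d : nat) (a b : 'I_d -> nat) (S : {set Uspace a b})
    (i : 'I_d) : {set 'I_(amax a + b i)} :=
  [set x | (Tagged (fun i => 'I_(amax a + b i)) x : Uspace a b) \in S].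

Definition Qgood (d : nat) (a b : 'I_d -> nat) (S : {set Uspace a b}) : bool :=
  [exists pi : {perm 'I_d}, forall i : 'I_d,
    (Uslice S i \subset [set x : 'I_(amax a + b i) | x < a (pi i) + b i])
    && (#|Uslice S i| == b i)].

Definition Q (d : nat) (a b : 'I_d -> nat) : nat :=
  #|[set S : {set Uspace a b} | Qgood S]|.

(* Main.v *)
Require Import Defs.
From mathcomp Require Import all_boot all_algebra fingroup perm.
Set Implicit Arguments. Unset Strict Implicit. Unset Printing Implicit Defensive.
Import GRing.Theory Num.Theory.

Section Generic.
Local Open Scope ring_scope.
Variable R : comRingType.
Variable n : nat.
Variable pM : pred 'I_n.

Lemma det_eq_cols (A : 'M[R]_n) c1 c2 : c1 != c2 -> (forall r, A r c1 = A r c2) -> \det A = 0.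
Proof. move=> ne eqc; rewrite -det_tr; apply: (determinant_alternate ne) => r; rewrite !mxE; exact: eqc. Qed.

Definition Ef (C : 'M[R]_n) (f : 'I_n -> 'I_n) : 'M[R]_n :=
  \matrix_(r, c) if pM c then C r c else (r == f c)%:R.
Definition wt (C : 'M[R]_n) (f : 'I_n -> 'I_n) : R :=
  \prod_c (if pM c then (f c == c)%:R else C (f c) c).

Lemma det_expand C : \det C = \sum_(f : {ffun 'I_n -> 'I_n}) wt C f * \det (Ef C f).
Proof.
rewrite -det_tr.
under [in RHS]eq_bigr => f _ do rewrite -det_tr.
rewrite /determinant.
under eq_bigr => f _ do rewrite big_distrr /=.
rewrite exchange_big /=; apply: eq_bigr => s _.
under [in RHS]eq_bigr => f _ do rewrite mulrCA.
rewrite -big_distrr /=; congr (_ * _).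
under [in RHS]eq_bigr => f _ do rewrite /wt -big_split /=.
under [in RHS]eq_bigr => f _ do under eq_bigr => c _ do rewrite !mxE.
rewrite -(bigA_distr_bigA (fun c q => (if pM c then (q == c)%:R else C q c) *
     (if pM c then C (s c) c else (s c == q)%:R))) /=.
apply: eq_bigr => c _; rewrite !mxE.
case: (pM c).
  rewrite (bigD1 c) //= eqxx mul1r big1 ?addr0 // => q /negbTE ->; by rewrite mul0r.
rewrite (bigD1 (s c)) //= eqxx mulr1 big1 ?addr0 // => q; rewrite eq_sym => /negbTE ->; by rewrite mulr0.
Qed.

Lemma Ef_perm (f f' : 'I_n -> 'I_n) :
  {in [set c | ~~ pM c] &, injective f} ->
  [set f c | c in [set c | ~~ pM c]] = [set f' c | c in [set c | ~~ pM c]] ->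
  exists e : R, forall C, \det (Ef C f) = e * \det (Ef C f').
Proof.
move=> injf eqim.
pose sg c := if pM c then c else odflt c [pick c' | ~~ pM c' & f' c' == f c].
have sgP c : ~~ pM c -> ~~ pM (sg c) /\ f' (sg c) = f c.
  move=> Nc; rewrite /sg (negbTE Nc).
  have : f c \in [set f' c | c in [set c | ~~ pM c]] by rewrite -eqim imset_f // inE.
  case/imsetP => c0 Nc0 e0.
  case: pickP => [c' /andP[-> /eqP ->] // | /(_ c0)]; by rewrite inE in Nc0; rewrite Nc0 e0 eqxx.
have sg_inj : injective sg.
  move=> c1 c2; case N1: (pM c1); case N2: (pM c2).
  - by rewrite /sg N1 N2.
  - have [+ _] := sgP c2 (negbT N2); by rewrite /sg N1 => + e; rewrite -e N1.
  - have [+ _] := sgP c1 (negbT N1); by rewrite /sg N2 => + e; rewrite e N2.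
  have [_ e1] := sgP c1 (negbT N1); have [_ e2] := sgP c2 (negbT N2).
  move=> e; apply: injf; rewrite ?inE ?N1 ?N2 //; by rewrite -e1 -e2 e.
pose s := perm sg_inj.
exists (\det (perm_mx (s^-1)%g)) => C.
have -> : Ef C f = col_perm s (Ef C f').
  apply/matrixP => r c; rewrite !mxE permE.
  case N: (pM c); first by rewrite /sg N N.
  have [/negbTE -> e] := sgP c (negbT N); by rewrite e.
by rewrite col_permE det_mulmx mulrC.
Qed.
End Generic.

Section Space.
Variables (d : nat) (a b : 'I_d -> nat).
Local Notation A0 := (amax a).
Local Notation U := (Uspace a b).
Local Notation n := #|U|.

Definition ev (r : 'I_n) : U := enum_val r.
Definition tg (r : 'I_n) : 'I_d := tag (ev r).
Definition pos (r : 'I_n) : nat := tagged (ev r).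
Definition mk (j : 'I_d) (q : 'I_(A0 + b j)) : 'I_n :=
  enum_rank (Tagged (fun i => 'I_(amax a + b i)) q : U).
Arguments mk j q : clear implicits.

Lemma tg_mk j q : tg (mk j q) = j.
Proof. by rewrite /tg /ev /mk enum_rankK. Qed.
Lemma pos_mk j q : pos (mk j q) = q.
Proof. by rewrite /pos /ev /mk enum_rankK. Qed.

Lemma tag_pos_inj (x y : U) : tag x = tag y -> (tagged x : nat) = tagged y -> x = y.
Proof. case: x => j q; case: y => j' q' /= ejj; subst j' => /val_inj -> //. Qed.

Lemma ev_inj r1 r2 : tg r1 = tg r2 -> pos r1 = pos r2 -> r1 = r2.
Proof. by move=> e1 e2; apply: enum_val_inj; apply: tag_pos_inj. Qed.

Lemma pos_lt r : pos r < A0 + b (tg r).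
Proof. by rewrite /pos /tg; case: (ev r) => j q /=. Qed.

Definition pM (c : 'I_n) := pos c < A0.
Definition Ncols := [set c : 'I_n | ~~ pM c].

Lemma card_slice (S : {set U}) j :
  #|Uslice S j| = #|[set y in S | tag y == j]|.
Proof.
have -> : [set y in S | tag y == j] =
   [set (Tagged (fun i => 'I_(amax a + b i)) q : U) | q in Uslice S j].
  apply/setP => y; rewrite !inE; apply/andP/imsetP.
    case: y => j' q /= [yS /eqP ej]; subst j; exists q => //; by rewrite inE.
  by case=> q; rewrite inE => qS ->; rewrite qS /=.
rewrite card_imset // => q1 q2 /(congr1 (fun z : U => val (tagged z))) /= /val_inj //.
Qed.

Lemma card_Ncols_j j : #|[set c : 'I_n | ~~ pM c & tg c == j]| = b j.
Proof.
have -> : [set c : 'I_n | ~~ pM c & tg c == j] = [set mk j (rshift A0 l) | l : 'I_(b j)].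
  apply/setP => c; rewrite !inE; apply/andP/imsetP.
    rewrite /pM -leqNgt => -[le /eqP ej].
    have lt : pos c - A0 < b j by rewrite ltn_subLR // -ej pos_lt.
    exists (Ordinal lt) => //; apply: ev_inj; rewrite ?tg_mk ?pos_mk //= subnKC //.
  case=> l _ ->; by rewrite /pM tg_mk pos_mk /= eqxx -leqNgt leq_addr.
rewrite card_imset ?card_ord // => l1 l2 /(congr1 pos); rewrite !pos_mk /= => /eqP.
by rewrite eqn_add2l => /eqP /val_inj.
Qed.

End Space.
Arguments mk {d a b} j q.

Lemma card_lt_le N m : #|[set q : 'I_N | q < m]| <= m.
Proof.
rewrite cardE -(size_map val) -[X in _ <= X](size_iota 0).
apply: uniq_leq_size; first by rewrite map_inj_uniq ?enum_uniq //; exact: val_inj.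
by move=> x /mapP [q]; rewrite mem_enum inE => lt ->; rewrite mem_iota.
Qed.

Lemma block_sum N (s s' : {set 'I_N}) m :
  #|s| = #|s'| -> (forall q, q \in s -> q < m) ->
  (forall q, q \in s' -> q < m -> q \in s) ->
  \sum_(q in s) (q : nat) + #|s :\: s'| <= \sum_(q in s') (q : nat).
Proof.
move=> cs hs hs'.
rewrite (big_setID s') [X in _ <= X](big_setID s) setIC /= -addnA leq_add2l.
have e : #|s :\: s'| = #|s' :\: s|.
  by apply/eqP; rewrite -(eqn_add2l #|s :&: s'|) cardsID setIC cardsID cs.
apply: (@leq_trans (#|s :\: s'| * m)).
  rewrite -sum_nat_const -sum1_card -big_split /=; apply: leq_sum => q.
  by rewrite inE => /andP [_ qs]; rewrite addn1 hs.
rewrite e -sum_nat_const; apply: leq_sum => q; rewrite inE => /andP [nqs qs'].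
by rewrite leqNgt; apply/negP => lt; move: nqs; rewrite hs'.
Qed.

Section Lower.
Variables (d : nat) (a b : 'I_d -> nat).
Local Notation U := (Uspace a b).

Definition Qs := [set S : {set U} | Qgood S].
Definition sgm (S : {set U}) := \sum_(j < d) \sum_(q in Uslice S j) (q : nat).
Definition rel_sg (S1 S2 : {set U}) := sgm S2 <= sgm S1.
Definition ss := sort rel_sg (enum Qs).
Definition goodpi (S : {set U}) (pi : {perm 'I_d}) :=
  [forall i, (Uslice S i \subset [set x : 'I_(amax a + b i) | x < a (pi i) + b i]) && (#|Uslice S i| == b i)].
Definition piS (S : {set U}) : {perm 'I_d} :=
  if [pick pi | goodpi S pi] is Some pi then pi else 1%g.
Definition Aof (S : {set U}) :=
  [set x : U | (tagged x < a (piS S (tag x)) + b (tag x)) && (x \notin S)].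
Definition XX (j : 'I_d) := [set x : U | tag x == j].

Lemma piS_spec S : S \in Qs -> goodpi S (piS S).
Proof.
rewrite inE => /existsP [pi gp]; rewrite /piS; case: pickP => // /(_ pi).
by rewrite /goodpi gp.
Qed.

Lemma size_ss : size ss = #|Qs|.
Proof. by rewrite size_sort cardE. Qed.

Lemma ss_mem i : i < size ss -> nth set0 ss i \in Qs.
Proof. by move=> lt; have := mem_nth set0 lt; rewrite /ss mem_sort mem_enum. Qed.

Lemma slice_ext (S S' : {set U}) : (forall j, Uslice S j = Uslice S' j) -> S = S'.
Proof.
move=> e; apply/setP => -[j q].
have : q \in Uslice S j = (q \in Uslice S' j) by rewrite e.
by rewrite !inE.
Qed.

Lemma XXcap (S : {set U}) j : #|S :&: XX j| = #|Uslice S j|.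
Proof.
rewrite card_slice; apply: eq_card => y; by rewrite !inE.
Qed.

Lemma key (S S' : {set U}) : S \in Qs -> S' \in Qs -> Aof S :&: S' = set0 ->
  sgm S' <= sgm S -> S = S'.
Proof.
move=> SQ S'Q emp le.
have gS := piS_spec SQ; have gS' := piS_spec S'Q.
have bl j : \sum_(q in Uslice S j) (q : nat) + #|Uslice S j :\: Uslice S' j| <=
            \sum_(q in Uslice S' j) (q : nat).
  move/forallP: gS => /(_ j) /andP [/subsetP sub /eqP c1].
  move/forallP: gS' => /(_ j) /andP [_ /eqP c2].
  apply: (block_sum (m := a (piS S j) + b j)); first by rewrite c1 c2.
    by move=> q /sub; rewrite inE.
  move=> q; rewrite !inE => qS' lt; apply/negPn/negP => nq.
  have : Tagged (fun i => 'I_(amax a + b i)) q \in Aof S :&: S' by rewrite !inE /= lt nq.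
  by rewrite emp inE.
have tot : sgm S + \sum_(j < d) #|Uslice S j :\: Uslice S' j| <= sgm S'.
  by rewrite /sgm -big_split /=; apply: leq_sum => j _; apply: bl.
have z : \sum_(j < d) #|Uslice S j :\: Uslice S' j| == 0.
  by rewrite -leqn0 -(leq_add2l (sgm S)) addn0; apply: leq_trans tot le.
move: z; rewrite sum_nat_eq0 => /forallP z.
apply: slice_ext => j; apply/eqP; rewrite eqEcard.
move: (z j) => /= /eqP /cards0_eq /eqP; rewrite setD_eq0 => ->.
move/forallP: gS => /(_ j) /andP [_ /eqP ->].
by move/forallP: gS' => /(_ j) /andP [_ /eqP ->]; rewrite leqnn.
Qed.


Lemma lower : exists (T : finType) (X : 'I_d -> {set T}) (A B : 'I_(Q a b) -> {set T}),
      pairwise_disjoint X /\ two_families X a b A B.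
Proof.
exists U, XX, (fun i => Aof (nth set0 ss i)), (fun i => nth set0 ss i).
have lt (i : 'I_(Q a b)) : i < size ss by rewrite size_ss; exact: ltn_ord.
have memQ (i : 'I_(Q a b)) : nth set0 ss i \in Qs := ss_mem (lt i).
have tr : transitive rel_sg by move=> y x z; rewrite /rel_sg => h1 h2; exact: leq_trans h2 h1.
have srt : sorted rel_sg ss by apply: sort_sorted => x y; rewrite /rel_sg leq_total.
have uq : uniq ss by rewrite sort_uniq enum_uniq.
split.
  move=> j k ne; rewrite disjoint_subset; apply/subsetP => x; rewrite !inE => /eqP ->.
  exact: ne.
rewrite /two_families. split.
  by move=> i; apply/subsetP => x _; apply/bigcupP; exists (tag x) => //; rewrite inE.
split.
  by move=> i; apply/subsetP => x _; apply/bigcupP; exists (tag x) => //; rewrite inE.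
split.
  by move=> i; rewrite disjoint_subset; apply/subsetP => x; rewrite !inE => /andP [_ ->].
split.
  move=> i k ik; apply/negP => /eqP emp.
  have le := sorted_ltn_nth tr set0 srt i k (lt i) (lt k) ik.
  have e := key (memQ i) (memQ k) emp le.
  by move: (nth_uniq set0 (lt i) (lt k) uq); rewrite e eqxx (ltn_eqF ik).
split.
  by move=> i j; rewrite XXcap; move/forallP: (piS_spec (memQ i)) => /(_ j) /andP [_ /eqP ->].
move=> i; exists (piS (nth set0 ss i)) => j; rewrite XXcap.
set S := nth set0 ss i.
have -> : Uslice (Aof S) j =
   [set q : 'I_(amax a + b j) | q < a (piS S j) + b j] :\: Uslice S j.
  by apply/setP => q; rewrite !inE andbC.
rewrite cardsD; move/forallP: (piS_spec (memQ i)) => /(_ j) /andP [/setIidPr -> /eqP ->].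
by rewrite leq_subLR [X in _ <= X]addnC; exact: card_lt_le.
Qed.

End Lower.

Section Upper.
Variables (d : nat) (a b : 'I_d -> nat) (T : finType) (X : 'I_d -> {set T})
  (h : nat) (A B : 'I_h -> {set T}).
Hypothesis HAX : forall i, A i \subset \bigcup_(j < d) X j.
Hypothesis Hdis : forall i, [disjoint A i & B i].
Hypothesis Hskew : forall i j : 'I_h, i < j -> A i :&: B j != set0.
Hypothesis HB : forall i j, #|B i :&: X j| <= b j.
Variable pis : 'I_h -> {perm 'I_d}.
Hypothesis Hpis : forall i j, #|A i :&: X j| <= a (pis i j).

Local Notation A0 := (amax a).
Local Notation U := (Uspace a b).
Local Notation n := #|U|.
Local Notation tg := (@tg d a b).
Local Notation pos := (@pos d a b).
Local Notation pM := (@pM d a b).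

Definition cA i j := a (pis i j).
Lemma cA_le i j : cA i j <= A0.
Proof. exact: leq_bigmax. Qed.

Definition rk (x : T) : nat := enum_rank x.
Definition parX (S : {set T}) (off l : nat) : nat :=
  if l < #|S| then nth 0 (map rk (enum S)) l else #|T| + off + l.

Lemma parX_small (S : {set T}) off l : l < #|S| -> exists2 x, x \in S & parX S off l = rk x.
Proof.
move=> lt; rewrite /parX lt.
have : nth 0 (map rk (enum S)) l \in map rk (enum S) by rewrite mem_nth // size_map -cardE.
by case/mapP => x; rewrite mem_enum => xS ->; exists x.
Qed.

Lemma rk_lt x : rk x < #|T|.
Proof. exact: ltn_ord. Qed.

Lemma parX_inj (S : {set T}) off l1 l2 : parX S off l1 = parX S off l2 -> l1 = l2.
Proof.
have uq : uniq (map rk (enum S)).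
  rewrite map_inj_uniq ?enum_uniq // => x y /val_inj; exact: enum_rank_inj.
rewrite /parX; case: ifP => h1; case: ifP => h2.
- move/eqP; rewrite nth_uniq ?size_map -?cardE //; by move/eqP.
- move=> e; have := mem_nth 0 (_ : l1 < size (map rk (enum S))); rewrite size_map -cardE.
  move=> /(_ h1) /mapP [x _]; rewrite e => ex; have := rk_lt x; rewrite -ex.
  by rewrite -addnA ltnNge leq_addr.
- move=> e; have := mem_nth 0 (_ : l2 < size (map rk (enum S))); rewrite size_map -cardE.
  move=> /(_ h2) /mapP [x _]; rewrite -e => ex; have := rk_lt x; rewrite -ex.
  by rewrite -addnA ltnNge leq_addr.
- by move/eqP; rewrite eqn_add2l => /eqP.
Qed.

Definition parA i j l := parX (A i :&: X j) 0 l.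
Definition parB k j l := parX (B k :&: X j) A0 l.

Lemma parAB_neq i j l1 l2 : l1 < A0 -> parA i j l1 != parB i j l2.
Proof.
move=> l1A; apply/eqP; rewrite /parA /parB.
case: (ltnP l1 #|A i :&: X j|) => h1.
  have [x xA ->] := parX_small 0 h1.
  case: (ltnP l2 #|B i :&: X j|) => h2.
    have [y yB ->] := parX_small A0 h2.
    move=> /val_inj /enum_rank_inj exy; subst y.
    move: xA yB; rewrite !inE => /andP[xA _] /andP[xB _].
    by have := Hdis i; rewrite disjoint_subset => /subsetP /(_ x xA); rewrite inE xB.
  rewrite /parX ltnNge h2 /= => e; have := rk_lt x; rewrite e.
  by rewrite -addnA ltnNge leq_addr.
rewrite {1}/parX ltnNge h1 /=.
case: (ltnP l2 #|B i :&: X j|) => h2.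
  have [y yB ->] := parX_small A0 h2.
  move=> e; have := rk_lt y; rewrite -e.
  by rewrite -addnA ltnNge leq_addr.
rewrite /parX ltnNge h2 /= addn0 => /eqP; rewrite -addnA eqn_add2l => /eqP e.
by move: l1A; rewrite e ltnNge leq_addr.
Qed.

Local Open Scope ring_scope.

Definition MA i : 'M[rat]_n := \matrix_(r, c)
  if tg r == tg c then
    (if (pos c < cA i (tg c))%N then (parA i (tg c) (pos c))%:R ^+ pos r
     else (pos r == (b (tg c) + pos c)%N)%:R)
  else 0.
Definition NB k : 'M[rat]_n := \matrix_(r, c)
  if tg r == tg c then (parB k (tg c) (pos c - A0))%:R ^+ pos r else 0.
Definition Cm i k : 'M[rat]_n := \matrix_(r, c) if pM c then MA i r c else NB k r c.
Definition P : 'M[rat]_h := \matrix_(i, k) \det (Cm i k).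


Lemma parX_index (S : {set T}) off x : x \in S -> parX S off (index x (enum S)) = rk x.
Proof.
move=> xS; have xe : x \in enum S by rewrite mem_enum.
rewrite /parX cardE index_mem xe (nth_map x) ?index_mem // nth_index //.
Qed.

Lemma P_trig (i k : 'I_h) : (i < k)%N -> P i k = 0.
Proof.
move=> ik; have := Hskew ik; case/set0Pn => x /setIP [xA xB].
have /bigcupP [j _ xX] := subsetP (HAX i) x xA.
have xAX : x \in A i :&: X j by rewrite inE xA.
have xBX : x \in B k :&: X j by rewrite inE xB.
set lA := index x (enum (A i :&: X j)).
set lB := index x (enum (B k :&: X j)).
have hA : (lA < #|A i :&: X j|)%N by rewrite cardE index_mem mem_enum.
have hB : (lB < #|B k :&: X j|)%N by rewrite cardE index_mem mem_enum.
have lAc : (lA < cA i j)%N := leq_trans hA (Hpis i j).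
have lAA : (lA < A0)%N := leq_trans lAc (cA_le i j).
have lBb : (lB < b j)%N := leq_trans hB (HB k j).
have p1 : (lA < A0 + b j)%N by apply: leq_trans lAA (leq_addr _ _).
have p2 : (A0 + lB < A0 + b j)%N by rewrite ltn_add2l.
rewrite mxE; apply: (det_eq_cols (c1:=mk j (Ordinal p1)) (c2:=mk j (Ordinal p2))).
  apply/negP => /eqP /(congr1 pos); rewrite !pos_mk /= => e.
  by move: lAA; rewrite e ltnNge leq_addr.
have nB : (A0 + lB < A0)%N = false by rewrite ltnNge leq_addr.
move=> r; rewrite !mxE /pM !tg_mk !pos_mk /= lAA nB.
case: eqP => // _; rewrite lAc addKn /parA /parB !parX_index //.
Qed.



Lemma CmE i k r c : Cm i k r c =
  if tg r == tg c then
    (if pM c then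
      (if (pos c < cA i (tg c))%N then (parA i (tg c) (pos c))%:R ^+ pos r
       else (pos r == (b (tg c) + pos c)%N)%:R)
     else (parB k (tg c) (pos c - A0))%:R ^+ pos r)
  else 0.
Proof. by rewrite !mxE; case: (pM c); case: eqP. Qed.

Lemma natrat_inj : injective (fun m : nat => m%:R : rat).
Proof. by move=> x y /eqP; rewrite eqr_nat => /eqP. Qed.

Lemma Cm_ker i (u : 'rV[rat]_n) : u *m Cm i i = 0 -> u = 0.
Proof.
move=> uC.
have Hc c : \sum_r u 0 r * Cm i i r c = 0 by move/rowP: uC => /(_ c); rewrite !mxE.
have Hc' c : \sum_(r | tg r == tg c) u 0 r *
    (if pM c then
      (if (pos c < cA i (tg c))%N then (parA i (tg c) (pos c))%:R ^+ pos r
       else (pos r == (b (tg c) + pos c)%N)%:R)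
     else (parB i (tg c) (pos c - A0))%:R ^+ pos r) = 0.
  rewrite -[RHS](Hc c) big_mkcond; apply: eq_bigr => r _; rewrite CmE.
  by case: eqP => _; rewrite ?mulr0.
apply/rowP => r0; rewrite mxE.
set j := tg r0.
pose p : {poly rat} := \sum_(r | tg r == j) u 0 r *: 'X^(pos r).
have coefp m : p`_m = \sum_(r | tg r == j) u 0 r * (m == pos r)%:R.
  by rewrite /p coef_sum; apply: eq_bigr => r _; rewrite coefZ coefXn.
have hornp t : p.[t] = \sum_(r | tg r == j) u 0 r * t ^+ pos r.
  by rewrite /p horner_sum; apply: eq_bigr => r _; rewrite hornerZ hornerXn.
have pad r : tg r = j -> (cA i j + b j <= pos r)%N -> u 0 r = 0.
  move=> tr le.
  have bl : (b j <= pos r)%N by apply: leq_trans le; rewrite leq_addl.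
  have lt0 : (pos r - b j < A0)%N by rewrite ltn_subLR // addnC -tr pos_lt.
  have lt : (pos r - b j < A0 + b j)%N by apply: leq_trans lt0 (leq_addr _ _).
  have := Hc' (mk j (Ordinal lt)).
  have nc : (pos r - b j < cA i j)%N = false by rewrite ltnNge leq_subRL // addnC le.
  rewrite /pM !tg_mk !pos_mk /= lt0 nc.
  rewrite (bigD1 r) ?tr //=. rewrite (subnKC bl) eqxx mulr1 big1 ?addr0 // => r' /andP[/eqP t' ne].
  case: eqP => [e|]; last by rewrite mulr0.
  by case/eqP: ne; apply: ev_inj; rewrite ?t' ?tr.
have rootA l : (l < cA i j)%N -> p.[(parA i j l)%:R] = 0.
  move=> lc; have lA : (l < A0)%N := leq_trans lc (cA_le i j).
  have lt : (l < A0 + b j)%N by apply: leq_trans lA (leq_addr _ _).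
  have := Hc' (mk j (Ordinal lt)).
  by rewrite /pM !tg_mk !pos_mk /= lA lc hornp.
have rootB l : (l < b j)%N -> p.[(parB i j l)%:R] = 0.
  move=> lb; have lt : (A0 + l < A0 + b j)%N by rewrite ltn_add2l.
  have nA : (A0 + l < A0)%N = false by rewrite ltnNge leq_addr.
  have := Hc' (mk j (Ordinal lt)).
  by rewrite /pM !tg_mk !pos_mk /= nA addKn hornp.
pose rs := [seq (m%:R : rat) | m <- [seq parA i j l | l <- iota 0 (cA i j)] ++
                                  [seq parB i j l | l <- iota 0 (b j)]].
have urs : uniq rs.
  rewrite map_inj_uniq; last exact: natrat_inj.
  rewrite cat_uniq !map_inj_uniq ?iota_uniq //=; try exact: parX_inj.
  rewrite andbT; apply/hasPn => m /mapP [l2 _ ->]; apply/negP => /mapP [l1].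
  rewrite mem_iota /= => lc e; move: (parAB_neq i j l2 (leq_trans lc (cA_le i j))).
  by rewrite -e eqxx.
have rrs : all (root p) rs.
  apply/allP => t /mapP [m]; rewrite mem_cat => /orP [] /mapP [l];
    rewrite mem_iota /= => lt -> ->; rewrite /root ?rootA ?rootB //.
have sp : (size p <= cA i j + b j)%N.
  apply/leq_sizeP => m le; rewrite coefp big1 // => r /eqP tr.
  case: eqP => [e|]; last by rewrite mulr0.
  by rewrite pad ?mul0r // -e.
have p0 : p = 0.
  apply/eqP; apply: contraT => pn0.
  have := max_poly_roots pn0 rrs urs.
  by rewrite !size_map size_cat !size_map !size_iota ltnNge sp.
have := coefp (pos r0); rewrite p0 coef0 (bigD1 r0) //= eqxx mulr1 big1 ?addr0 //.
move=> r /andP[/eqP t' ne]; case: eqP => [e|]; last by rewrite mulr0.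
by case/eqP: ne; apply: ev_inj; rewrite ?t'.
Qed.


Lemma P_diag i : P i i != 0.
Proof.
rewrite mxE -unitfE -unitmxE -row_free_unit -kermx_eq0.
apply/eqP/row_matrixP => r; rewrite row0; apply: (Cm_ker (i:=i)).
by apply/sub_kermxP; rewrite row_sub.
Qed.

Lemma rank_P : \rank P = h.
Proof.
apply: mxrank_unit; rewrite unitmxE unitfE det_trig.
  by apply/prodf_neq0 => i _; apply: P_diag.
apply/forallP => i; apply/forallP => k; apply/implyP => ik.
by rewrite P_trig.
Qed.

Local Notation Ncols := (@Ncols d a b).
Local Notation ev := (@ev d a b).

Definition uu (f : 'I_n -> 'I_n) i := \det (Ef pM (MA i) f).
Definition vv (f : 'I_n -> 'I_n) k := wt pM (NB k) f.
Definition Qset := [set S : {set U} | Qgood S].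
Definition G : 'M[rat]_(h, #|Qset|) := \matrix_(i, s)
  if [pick g : {ffun 'I_n -> 'I_n} | dinjectiveb g Ncols &&
        ([set ev (g c) | c in Ncols] == enum_val s)] is Some g
  then \det (Ef pM (MA i) g) else 0.

Lemma P_expand : P = \sum_(f : {ffun 'I_n -> 'I_n}) (\col_i uu f i) *m (\row_k vv f k).
Proof.
apply/matrixP => i k; rewrite mxE (det_expand pM) summxE; apply: eq_bigr => f _.
rewrite !mxE big_ord1 !mxE mulrC; congr (_ * _).
  congr (\det _); apply/matrixP => r c; rewrite !mxE; case: ifP => //.
  by move=> ->.
rewrite /vv /wt; apply: eq_bigr => c _; case: ifP => // N; by rewrite mxE N.
Qed.


Lemma term (f : {ffun 'I_n -> 'I_n}) :
  exists H : 'M[rat]_(#|Qset|, h), (\col_i uu f i) *m (\row_k vv f k) = G *m H.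
Proof.
case: (boolP [forall k, vv f k == 0]) => [/forallP v0 | /forallPn [k vk]].
  exists 0; rewrite mulmx0; apply/matrixP => i k.
  by rewrite !mxE big_ord1 !mxE (eqP (v0 k)) mulr0.
suff [x ->] : exists x : 'cV[rat]_#|Qset|, \col_i uu f i = G *m x.
  by exists (x *m \row_k vv f k); rewrite mulmxA.
have tgf c : c \in Ncols -> tg (f c) = tg c.
  move=> Nc; move: vk; rewrite /vv /wt => /prodf_neq0 /(_ c isT).
  rewrite inE in Nc; rewrite (negbTE Nc) mxE; case: (tg (f c) =P tg c) => // _; by rewrite eqxx.
have zero : (forall i, uu f i = 0) -> exists x : 'cV[rat]_#|Qset|, \col_i uu f i = G *m x.
  move=> z; exists 0; rewrite mulmx0; apply/matrixP => i z'; by rewrite !mxE z.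
case: (boolP (dinjectiveb f Ncols)) => [finj | /dinjectivePn [c1 N1 [c2 N2 e12]]]; last first.
  apply: zero => i; rewrite /uu; apply: (det_eq_cols (c1:=c1) (c2:=c2)).
    by move: N2; rewrite !inE eq_sym => /andP[].
  move: N2 N1; rewrite !inE => /andP [_ N2] N1.
  by move=> r; rewrite !mxE (negbTE N1) (negbTE N2) e12.
case: (boolP [forall i, exists c, (c \in Ncols) &&
    (cA i (tg (f c)) + b (tg (f c)) <= pos (f c))%N]) => [/forallP hit | /forallPn [i0 /existsPn nohit]].
  apply: zero => i; have /existsP [c /andP [Nc le]] := hit i.
  set j := tg (f c) in le *.
  have bl : (b j <= pos (f c))%N by apply: leq_trans le; rewrite leq_addl.
  have lt0 : (pos (f c) - b j < A0)%N by rewrite ltn_subLR // addnC pos_lt.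
  have lt : (pos (f c) - b j < A0 + b j)%N by apply: leq_trans lt0 (leq_addr _ _).
  have nc : (pos (f c) - b j < cA i j)%N = false by rewrite ltnNge leq_subRL // addnC le.
  rewrite inE in Nc.
  rewrite /uu; apply: (det_eq_cols (c1 := mk j (Ordinal lt)) (c2 := c)).
    by apply/negP => /eqP e; move: Nc; rewrite -e /pM pos_mk /= lt0.
  move=> r; rewrite !mxE (negbTE Nc) /pM tg_mk pos_mk /= lt0 nc (subnKC bl).
  case: (r =P f c) => [-> | ne]; first by rewrite !eqxx.
  case: eqP => // tr; case: eqP => // pr.
  by case: ne; apply: ev_inj.
set S := [set ev (f c) | c in Ncols].
have SQ : S \in Qset.
  rewrite inE; apply/existsP; exists (pis i0); apply/forallP => j; apply/andP; split.
    apply/subsetP => q; rewrite !inE => /imsetP [c Nc e].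
    have := nohit c; rewrite Nc /= -ltnNge.
    have t1 : tg (f c) = j by rewrite /tg -e.
    have p1 : pos (f c) = q by rewrite /pos -e.
    by rewrite t1 p1.
  rewrite card_slice.
  have -> : [set y in S | tag y == j] =
      [set ev (f c) | c in [set c : 'I_n | ~~ pM c & tg c == j]].
    apply/setP => y; rewrite !inE; apply/andP/imsetP.
      case=> /imsetP [c Nc ->] /eqP tj; exists c => //; rewrite inE.
      move: (Nc); rewrite inE => ->; rewrite -tgf //; exact/eqP.
    case=> c; rewrite inE => /andP [Nc /eqP tj] ->; split.
      by apply: imset_f; rewrite inE.
    by change (tg (f c) == j); rewrite tgf ?inE // tj.
  rewrite card_in_imset ?card_Ncols_j //.
  move=> c1 c2; rewrite !inE => /andP [N1 _] /andP [N2 _] /enum_val_inj.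
  by apply: (dinjectiveP _ _ finj); rewrite inE.
set s := enum_rank_in SQ S.
have es : enum_val s = S := enum_rankK_in SQ SQ.
have Gs i : G i s = (if [pick g : {ffun 'I_n -> 'I_n} | dinjectiveb g Ncols &&
        ([set ev (g c) | c in Ncols] == enum_val s)] is Some g
  then \det (Ef pM (MA i) g) else 0) by rewrite mxE.
move: Gs; case: pickP => [g /andP [ginj /eqP gim] | none] Gs; last first.
  by have := none f; rewrite finj es eqxx.
have eim : [set f c | c in [set c | ~~ pM c]] = [set g c | c in [set c | ~~ pM c]].
  apply: (imset_inj (@enum_val_inj _ _)); rewrite -!imset_comp.
  by rewrite gim es.
have [e He] := Ef_perm rat (dinjectiveP _ _ finj) eim.
exists (\col_z (if z == s then e else 0)).
apply/matrixP => i z; rewrite !mxE (bigD1 s) //= big1 => [|z' ne]; last first.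
  by rewrite !mxE (negbTE ne) mulr0.
by rewrite Gs !mxE eqxx addr0 /uu He mulrC.
Qed.

Lemma upper : (h <= #|Qset|)%N.
Proof.
have [H PGH] : exists H, P = G *m H.
  rewrite P_expand; apply: (big_ind (fun Y => exists H, Y = G *m H)).
  - by exists 0; rewrite mulmx0.
  - by move=> X1 X2 [H1 ->] [H2 ->]; exists (H1 + H2); rewrite mulmxDr.
  - by move=> f _; apply: term.
by rewrite -rank_P PGH; apply: leq_trans (mxrankM_maxl _ _) (rank_leq_col _).
Qed.

End Upper.


Theorem theorem1 (d : nat) (a b : 'I_d -> nat) :
  (forall (T : finType) (X : 'I_d -> {set T}) (h : nat) (A B : 'I_h -> {set T}),
      pairwise_disjoint X -> two_families X a b A B -> h <= Q a b)
  /\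
  (exists (T : finType) (X : 'I_d -> {set T}) (A B : 'I_(Q a b) -> {set T}),
      pairwise_disjoint X /\ two_families X a b A B).
Proof.
split; last exact: lower.
move=> T X h A B _ [HAX [HBX [Hdis [Hskew [HB Hpi]]]]].
have [pis Hpis] := fin_all_exists Hpi.
exact: (upper HAX Hdis Hskew HB Hpis).
Qed.
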